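(* Let $a>1$ be an integer that is a zero divisor in $\mathbb{Z}/m\mathbb{Z}$, let $k\ge 1$ with $a^k\mid m$, and let $(K_n,\alpha)$ be an edge-labeled complete graph over $\mathbb{Z}/m\mathbb{Z}$ with ordered edge labels $a^{i_1},a^{i_2},\dots,a^{i_{r_n}}$. (1) If $a^{i_{r_n}}\mid a^{i_{r_n-1}}\mid\cdots\mid a^{i_2}\mid a^{i_1}\mid a^k$ with $i_{r_n}\ge1$ and $i_1<k$, then the set consisting of $(1,\dots,1)$ together with, for each $j=2,\dots,n$, the vector with $a^{i_{r_{j-1}+1}}$ at $v_j$ and $0$ elsewhere, is a minimum flow-up generating set of $[\mathbb{Z}/m\mathbb{Z}]_{(K_n,\alpha)}$; thus the rank is $n$. (2) If $a^{i_1}\mid a^{i_2}\mid\cdots\mid a^{i_{r_n}}\mid a^k$ with $i_1\ge1$ and $i_{r_n}<k$, then the set consisting of $(1,\dots,1)$ together with, for each $j=2,\dots,n$, the vector with entries $a^{i_{r_n-(n-j)}}$ at $v_j,\dots,v_n$ and $0$ at $v_1,\dots,v_{j-1}$, is a minimum flow-up generating set of $[\mathbb{Z}/m\mathbb{Z}]_{(K_n,\alpha)}$; thus the rank is $n$.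
   Context: A spline on an edge-labeled graph $(G,\alpha)$ over $\mathbb{Z}/m\mathbb{Z}$ (edges labeled by nonzero ideals) is a vector $(f_{v_1},\dots,f_{v_n})\in(\mathbb{Z}/m\mathbb{Z})^n$ with $f_{v_i}-f_{v_j}\in\alpha(v_iv_j)$ for every edge; the splines form a $\mathbb{Z}$-module $[\mathbb{Z}/m\mathbb{Z}]_{(G,\alpha)}$. An $i$-th flow-up class is a spline with $f_{v_i}\ne0$ and $f_{v_t}=0$ for $t<i$. A minimum generating set is a generating set of the $\mathbb{Z}$-module of smallest size (the rank); a minimum flow-up generating set is one consisting of flow-up classes. $K_n$ is the complete graph on $v_1,\dots,v_n$; $r_k=k(k-1)/2$; for $1\le j<k\le n$ the edge $v_jv_k$ is $e_{r_{k-1}+j}$. ''Ordered edge labels $l_1,\dots,l_{r_n}$'' means $\alpha(e_s)$ is the ideal generated by $l_s+m\mathbb{Z}$. Vectors are written $(f_{v_1},\dots,f_{v_n})$. *)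

(* Defs.v *)
From HB Require Import structures.
From mathcomp Require Import all_boot all_order all_algebra.
Set Implicit Arguments. Unset Strict Implicit. Unset Printing Implicit Defensive.
Import Order.TTheory GRing.Theory Num.Theory.
Local Open Scope ring_scope.

(* Z/mZ is 'Z_m (with 1 < m); vertices v_1..v_n are 'I_n (v_t is index t-1);
   vectors (f_{v_1},...,f_{v_n}) are row vectors 'rV['Z_m]_n. *)

Definition rr (k : nat) : nat := (k * k.-1 %/ 2)%N.

(* 1-indexed: for 1 <= j < k <= n, the edge v_j v_k is e_(r_{k-1}+j) *)
Definition edge_index (j k : nat) : nat := (rr k.-1 + j)%N.

Definition in_ideal (m : nat) (x : 'Z_m) (l : nat) : Prop :=
  exists c : 'Z_m, x = c * (l%:R).

(* splines on (K_n, alpha) with ordered edge labels l_1, ..., l_{r_n}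
   (alpha(e_s) = ideal generated by l s + mZ); vertex indices are 0-based *)
Definition is_spline (m n : nat) (l : nat -> nat) (f : 'rV['Z_m]_n) : Prop :=
  forall j k : 'I_n, (j < k)%N ->
    in_ideal (f ord0 j - f ord0 k) (l (edge_index j.+1 k.+1)).

Definition is_flowup_at (m n : nat) (l : nat -> nat) (f : 'rV['Z_m]_n)
    (i : 'I_n) : Prop :=
  is_spline l f /\ f ord0 i != 0 /\ (forall t : 'I_n, (t < i)%N -> f ord0 t = 0).

Definition is_flowup (m n : nat) (l : nat -> nat) (f : 'rV['Z_m]_n) : Prop :=
  exists i : 'I_n, is_flowup_at l f i.

Definition is_generating_set (m n : nat) (l : nat -> nat)
    (T : {set 'rV['Z_m]_n}) : Prop :=
  (forall g, g \in T -> is_spline l g) /\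
  (forall f, is_spline l f ->
     exists c : 'rV['Z_m]_n -> int, f = \sum_(g in T) g *~ c g).

Definition is_min_generating_set (m n : nat) (l : nat -> nat)
    (S : {set 'rV['Z_m]_n}) : Prop :=
  is_generating_set l S /\
  (forall T : {set 'rV['Z_m]_n}, is_generating_set l T -> (#|S| <= #|T|)%N).

Definition is_min_flowup_generating_set (m n : nat) (l : nat -> nat)
    (S : {set 'rV['Z_m]_n}) : Prop :=
  is_min_generating_set l S /\ (forall g, g \in S -> is_flowup l g).

Definition zero_divisor (m : nat) (a : nat) : Prop :=
  (a%:R : 'Z_m) != 0 /\ exists b : 'Z_m, b != 0 /\ (a%:R : 'Z_m) * b = 0.

(* generators of part (1): for 0-based j in 1..n-1, a^{i_{r_j + 1}} at v_{j+1} *)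
Definition gen1 (m n a : nat) (i : nat -> nat) (j : 'I_n) : 'rV['Z_m]_n :=
  \row_(t < n) (if t == j then ((a ^ i (rr j + 1))%N)%:R else 0).

(* generators of part (2): for 0-based j in 1..n-1,
   a^{i_{r_n - (n - (j+1))}} at v_{j+1},...,v_n and 0 before *)
Definition gen2 (m n a : nat) (i : nat -> nat) (j : 'I_n) : 'rV['Z_m]_n :=
  \row_(t < n) (if (j <= t)%N then ((a ^ i (rr n - (n - j.+1)))%N)%:R else 0).

Definition ones (m n : nat) : 'rV['Z_m]_n := const_mx 1.

(* Main.v *)
Require Import Defs.
From HB Require Import structures.
From mathcomp Require Import all_boot all_order all_algebra.
Import Order.TTheory GRing.Theory Num.Theory.
From mathcomp Require Import ring zify.
Set Implicit Arguments. Unset Strict Implicit.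
Local Open Scope ring_scope.



Lemma mxMnE (R : zmodType) (p q : nat) (A : 'M[R]_(p,q)) i j (k : nat) :
  (A *+ k) i j = A i j *+ k.
Proof.
elim: k => [|k IH]; first by rewrite !mulr0n mxE.
by rewrite !mulrS mxE IH.
Qed.

Lemma mxMzE (R : zmodType) (p q : nat) (A : 'M[R]_(p,q)) i j (z : int) :
  (A *~ z) i j = A i j *~ z.
Proof.
case: z => k; first by rewrite -!pmulrn mxMnE.
by rewrite !NegzE !mulrNz mxE -!pmulrn mxMnE.
Qed.

Definition Span m n (T : {set 'rV['Z_m]_n}) (f : 'rV['Z_m]_n) :=
  exists c : 'rV['Z_m]_n -> int, f = \sum_(g in T) g *~ c g.
Arguments Span {m n}.

Lemma span0 m n (T : {set 'rV['Z_m]_n}) : Span T 0.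
Proof. by exists (fun _ => 0); rewrite big1 // => g _; rewrite mulr0z. Qed.

Lemma spanD m n (T : {set 'rV['Z_m]_n}) f h : Span T f -> Span T h -> Span T (f + h).
Proof.
move=> [c1 ->] [c2 ->]; exists (fun g => c1 g + c2 g).
by rewrite -big_split; apply: eq_bigr => g _; rewrite mulrzDr.
Qed.

Lemma spanZ m n (T : {set 'rV['Z_m]_n}) f z : Span T f -> Span T (f *~ z).
Proof.
move=> [c ->]; exists (fun g => c g * z).
by rewrite mulrz_suml; apply: eq_bigr => g _; rewrite mulrzA.
Qed.

Lemma span_mem m n (T : {set 'rV['Z_m]_n}) g : g \in T -> Span T g.
Proof.
move=> gT; exists (fun h => (h == g)%:R).
rewrite (bigD1 g) //= eqxx mulr1z big1 ?addr0 // => h /andP [_ /negbTE ->].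
by rewrite mulr0z.
Qed.

Lemma in_ideal0 m (l : nat) : @in_ideal m 0 l.
Proof. by exists 0; rewrite mul0r. Qed.

Lemma in_idealB m (l : nat) (x y : 'Z_m) : in_ideal x l -> in_ideal y l -> in_ideal (x - y) l.
Proof. by move=> [c ->] [d ->]; exists (c - d); rewrite mulrBl. Qed.

Lemma in_idealN m (l : nat) (x : 'Z_m) : in_ideal x l -> in_ideal (- x) l.
Proof. by move=> [c ->]; exists (- c); rewrite mulNr. Qed.

Lemma in_idealD m (l : nat) (x y : 'Z_m) : in_ideal x l -> in_ideal y l -> in_ideal (x + y) l.
Proof. by move=> [c ->] [d ->]; exists (c + d); rewrite mulrDl. Qed.

Lemma in_idealMz m (l : nat) (x : 'Z_m) z : in_ideal x l -> in_ideal (x *~ z) l.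
Proof. by move=> [c ->]; exists (c *~ z); rewrite mulrzAl. Qed.

Lemma in_ideal_dvd m (l l' : nat) (x : 'Z_m) : (l %| l')%N -> in_ideal x l' -> in_ideal x l.
Proof.
move=> /dvdnP [q ->] [c ->]; exists (c * q%:R); by rewrite natrM mulrA.
Qed.

Lemma in_ideal_nat m (l : nat) : @in_ideal m l%:R l.
Proof. by exists 1; rewrite mul1r. Qed.

Lemma splineB m n l (f g : 'rV['Z_m]_n) : is_spline l f -> is_spline l g -> is_spline l (f - g).
Proof.
move=> hf hg j k jk; rewrite !mxE.
have -> : f ord0 j - g ord0 j - (f ord0 k - g ord0 k) = (f ord0 j - f ord0 k) - (g ord0 j - g ord0 k) by ring.
exact: in_idealB (hf _ _ jk) (hg _ _ jk).
Qed.

Lemma splineD m n l (f g : 'rV['Z_m]_n) : is_spline l f -> is_spline l g -> is_spline l (f + g).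
Proof.
move=> hf hg j k jk; rewrite !mxE.
have -> : f ord0 j + g ord0 j - (f ord0 k + g ord0 k) = (f ord0 j - f ord0 k) + (g ord0 j - g ord0 k) by ring.
exact: in_idealD (hf _ _ jk) (hg _ _ jk).
Qed.

Lemma spline0 m n l : is_spline l (0 : 'rV['Z_m]_n).
Proof. by move=> j k _; rewrite !mxE subrr; apply: in_ideal0. Qed.

Lemma splineMz m n l (f : 'rV['Z_m]_n) z : is_spline l f -> is_spline l (f *~ z).
Proof.
move=> hf j k jk; rewrite !mxMzE -mulrzBl.
exact: in_idealMz (hf _ _ jk).
Qed.



Lemma gen_by_flowup m n l (S : {set 'rV['Z_m]_n}) :
  (forall g, g \in S -> is_spline l g) ->
  (forall (r : 'I_n) f, is_spline l f -> (forall t : 'I_n, (t < r)%N -> f ord0 t = 0) ->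
    exists g z, [/\ g \in S, (forall t : 'I_n, (t < r)%N -> g ord0 t = 0) & f ord0 r = g ord0 r *~ z]) ->
  forall f, is_spline l f -> Span S f.
Proof.
move=> hS hstep.
suff H : forall d, (d <= n)%N -> forall f, is_spline l f ->
   (forall t : 'I_n, (t < n - d)%N -> f ord0 t = 0) -> Span S f.
  by move=> f hf; apply: (H n (leqnn n)) => // t; rewrite subnn.
elim=> [|d IH] hd f hf hz.
  have -> : f = 0 by apply/rowP => t; rewrite mxE hz // subn0.
  exact: span0.
have rlt : (n - d.+1 < n)%N by lia.
pose r : 'I_n := Ordinal rlt.
have [g [z [gS gz fr]]] := hstep r f hf hz.
have -> : f = (f - g *~ z) + g *~ z by rewrite subrK.
apply: spanD; last by apply: spanZ; apply: span_mem.
apply: IH; first by lia.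
  by apply: splineB => //; apply: splineMz; apply: hS.
move=> t ht; rewrite !mxE mxMzE.
have [tr|] := ltnP t r; first by rewrite hz // gz // mul0rz subr0.
move=> rt; have /eqP tr : t == r by rewrite -val_eqE /= eqn_leq rt; simpl in *; lia.
by rewrite tr fr subrr.
Qed.

Lemma rank_lb (m n p' : nat) (M : 'rV['Z_m]_n -> Prop)
   (psi : 'rV['Z_m]_n -> 'rV['Z_m]_n) (G : 'I_n -> 'rV['Z_m]_n) (u : 'Z_m)
   (T : {set 'rV['Z_m]_n}) :
  (forall x y, psi (x - y) = psi x - psi y) ->
  (forall g, M g -> psi g *+ p'.+2 = 0) ->
  (forall j, M (G j)) -> M 0 -> (forall x y, M x -> M y -> M (x + y)) ->
  (forall x z, M x -> M (x *~ z)) ->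
  (forall j, psi (G j) = \row_t (if t == j then u else 0)) ->
  (forall c c' : nat, (c < p'.+2)%N -> (c' < p'.+2)%N -> u *+ c = u *+ c' -> c = c') ->
  (forall g, g \in T -> M g) ->
  (forall f, M f -> Span T f) ->
  (n <= #|T|)%N.
Proof.
set p := p'.+2.
move=> psiB hp MG M0 MD MZ hG hu MT span.
have psi0 : psi 0 = 0.
  have h := psiB 0 0. rewrite subr0 subrr in h. exact h.
have psiN x : psi (- x) = - psi x by rewrite -sub0r psiB psi0 sub0r.
have psiD x y : psi (x + y) = psi x + psi y by rewrite -{1}[y]opprK psiB psiN opprK.
have psiMn x k : psi (x *+ k) = psi x *+ k.
  by elim: k => [|k IH]; rewrite ?mulr0n ?psi0 // !mulrS psiD IH.
have psiMz x z : psi (x *~ z) = psi x *~ z.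
  case: z => k; first by rewrite -!pmulrn psiMn.
  by rewrite !NegzE !mulrNz psiN -!pmulrn psiMn.
have psiS (I : finType) (P : pred I) F : psi (\sum_(i | P i) F i) = \sum_(i | P i) psi (F i).
  exact: (big_morph psi psiD psi0).
have pz : (p%:Z != 0) by [].
have red x z : x *+ p = 0 -> x *~ z = x *+ `|(z %% p)%Z|%N.
  move=> hx; rewrite {1}(divz_eq z p) mulrzDr mulrC mulrzA -pmulrn hx mul0rz add0r.
  rewrite pmulrn; congr (_ *~ _); rewrite abszE ger0_norm // modz_ge0 //.
pose spl (c : {ffun 'I_n -> 'I_p}) := \sum_j G j *+ c j.
have Mspl c : M (spl c).
  apply: big_ind => // j _; rewrite pmulrn; exact: MZ.
have psispl c : psi (spl c) = \row_t (u *+ c t).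
  rewrite psiS; apply/rowP => t; rewrite summxE mxE (bigD1 t) //=.
  rewrite psiMn hG mxMnE mxE eqxx big1 ?addr0 // => j hj.
  by rewrite psiMn hG mxMnE mxE eq_sym (negbTE hj) mul0rn.
have inj : injective (fun c => psi (spl c)).
  move=> c c' /= e; apply/ffunP => t; apply: val_inj.
  have := congr1 (fun v : 'rV['Z_m]_n => v ord0 t) e; rewrite /= !psispl !mxE.
  by apply: hu.
set I := [set psi (spl c) | c : {ffun 'I_n -> 'I_p}].
set H := [set (\sum_(g in T) psi g *+ (e : {ffun 'rV['Z_m]_n -> 'I_p}) g) | e in pffun_on (ord0 : 'I_p) T [set: 'I_p]].
have cI : #|I| = (p ^ n)%N by rewrite card_imset // card_ffun card_ord card_ord.
have IH : I \subset H.
  apply/subsetP => x /imsetP [c _ ->].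
  have [d hd] := span (spl c) (Mspl c).
  apply/imsetP; exists [ffun g => if g \in T then inord `|(d g %% p)%Z|%N else ord0].
    apply/pffun_onP; split; last by move=> y _; rewrite inE.
    by apply/subsetP => g; rewrite inE ffunE; case: ifP => //; rewrite eqxx.
  rewrite hd psiS; apply: eq_bigr => g gT.
  rewrite psiMz ffunE gT inordK ?red //; first by apply: hp; apply: MT.
  have := ltz_mod (d g) pz; have := modz_ge0 (d g) pz.
  move: (d g %% p)%Z => w; rewrite /p; lia.
have := subset_leq_card IH; rewrite cI => h1.
have := leq_trans h1 (leq_imset_card _ _); rewrite card_pffun_on cardsT card_ord.
by rewrite leq_exp2l.
Qed.



Lemma ones_spline m n l : is_spline l (ones m n).
Proof. by move=> j k _; rewrite !mxE subrr; apply: in_ideal0. Qed.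

Lemma finish m n l (G' : 'I_n.+1 -> 'rV['Z_m]_n.+1) psi (u : 'Z_m) p' :
 (forall j : 'I_n.+1, (0 < j)%N -> is_spline l (G' j)) ->
 (forall j : 'I_n.+1, (0 < j)%N -> G' j ord0 j != 0) ->
 (forall j : 'I_n.+1, (0 < j)%N -> forall t : 'I_n.+1, (t < j)%N -> G' j ord0 t = 0) ->
 (forall (r : 'I_n.+1) f, (0 < r)%N -> is_spline l f ->
     (forall t : 'I_n.+1, (t < r)%N -> f ord0 t = 0) -> exists z, f ord0 r = G' r ord0 r *~ z) ->
 (forall x y, psi (x - y) = psi x - psi y) ->
 (forall g, is_spline l g -> psi g *+ p'.+2 = 0) ->
 psi (ones m n.+1) = \row_t (if t == ord0 then u else 0) ->
 (forall j : 'I_n.+1, (0 < j)%N -> psi (G' j) = \row_t (if t == j then u else 0)) ->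
 (forall c c' : nat, (c < p'.+2)%N -> (c' < p'.+2)%N -> u *+ c = u *+ c' -> c = c') ->
 let S := ones m n.+1 |: [set G' j | j : 'I_n.+1 & (0 < j)%N] in
 is_min_flowup_generating_set l S /\ #|S| = n.+1.
Proof.
move=> Gsp Gnz Gz step psiB hp pones pG hu S.
have hS : forall g, g \in S -> is_spline l g.
  move=> g /setU1P [->|/imsetP [j]]; first exact: ones_spline.
  by rewrite inE => j0 ->; apply: Gsp.
have gen : forall f, is_spline l f -> Span S f.
  apply: gen_by_flowup => // r f hf hz.
  have [r0|r0] := posnP r.
    exists (ones m n.+1), (nat_of_ord (f ord0 r))%:Z; split.
    - exact: setU11.
    - by move=> t; rewrite r0.
    - by rewrite mxE -pmulrn natr_Zp.
  have [z hzz] := step r f r0 hf hz.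
  exists (G' r), z; split => //; last by apply: Gz.
  by apply/setU1P; right; apply/imsetP; exists r; rewrite ?inE.
have cS : #|S| = n.+1.
  rewrite /S cardsU1.
  have -> : ones m n.+1 \notin [set G' j | j : 'I_n.+1 & (0 < j)%N].
    apply/negP => /imsetP [j]; rewrite inE => j0 e.
    have := Gz j j0 ord0 j0; rewrite -e mxE => /eqP; by rewrite oner_eq0.
  rewrite card_in_imset.
    have -> : #|[set j : 'I_n.+1 | (0 < j)%N]| = #|[set~ (ord0 : 'I_n.+1)]|.
      by apply: eq_card => j; rewrite !inE lt0n -val_eqE.
    by rewrite cardsC1 card_ord.
  move=> j j'; rewrite !inE => j0 j'0 e.
  apply/eqP; rewrite -val_eqE; case: (ltngtP j j') => // h.
    by have := Gnz j j0; rewrite e Gz // eqxx.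
  by have := Gnz j' j'0; rewrite -e Gz // eqxx.
split => //; split; first split.
- split => //; move=> f hf; exact: gen f hf.
- move=> T hT; have [hT1 hT2] := hT; rewrite cS.
  apply: (@rank_lb m n.+1 p' (is_spline l) psi
           (fun j => if j == ord0 then ones m n.+1 else G' j) u T) => //.
  + move=> j; case: ifPn => [_|]; first exact: ones_spline.
    rewrite -val_eqE -lt0n => j0; exact: Gsp.
  + exact: spline0.
  + by move=> x y; apply: splineD.
  + by move=> x z; apply: splineMz.
  + move=> j; case: ifPn => [/eqP -> //| ]; rewrite -val_eqE -lt0n => j0.
    exact: pG.
- move=> g /setU1P [->|/imsetP [j]].
    exists ord0; split; first exact: ones_spline.
    by rewrite mxE oner_eq0.
  rewrite inE => j0 ->; exists j; split; first exact: Gsp.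
  by split; [apply: Gnz | apply: Gz].
Qed.



Lemma rrS k : rr k.+1 = (rr k + k)%N.
Proof.
rewrite /rr; case: k => [|k] //=.
have -> : (k.+2 * k.+1 = k.+1 * 2 + k.+1 * k)%N by ring.
by rewrite divnMDl // addnC.
Qed.

Lemma rr_mono {s t} : (s <= t)%N -> (rr s <= rr t)%N.
Proof.
move=> st; rewrite -(subnKC st); elim: (t - s)%N => [|d IH]; first by rewrite addn0.
by rewrite addnS rrS; apply: leq_trans IH (leq_addr _ _).
Qed.

Lemma edge_bound n s t : (s < t)%N -> (t < n)%N -> (edge_index s.+1 t.+1 <= rr n)%N.
Proof.
move=> st tn; rewrite /edge_index /=.
apply: (leq_trans _ (rr_mono tn)); rewrite rrS; lia.
Qed.

Lemma nz_pow m a k e : (1 < a)%N -> (a ^ k %| m)%N -> (0 < m)%N -> (e < k)%N ->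
  ((a ^ e)%:R : 'Z_m) != 0.
Proof.
move=> a1 akm m0 ek; have m1 : (1 < m)%N.
  apply: leq_trans (dvdn_leq m0 akm); rewrite -{1}(expn0 a) ltn_exp2l //; lia.
apply/eqP => h; have := congr1 (fun x : 'Z_m => nat_of_ord x) h; rewrite /= val_Zp_nat // modn_small /=.
  by move=> /eqP; rewrite expn_eq0; lia.
apply: leq_trans (dvdn_leq m0 akm); by rewrite ltn_exp2l.
Qed.

Lemma in_ideal_pow m a e e' : (e' <= e)%N -> @in_ideal m ((a ^ e)%N%:R) (a ^ e').
Proof. by move=> h; apply: (in_ideal_dvd (dvdn_exp2l a h)); apply: in_ideal_nat. Qed.

Lemma w_ok m a k p e : (0 < a)%N -> (0 < p)%N -> (p %| a)%N -> (a ^ k %| m)%N -> (e < k)%N ->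
  ((a ^ e)%N%:R : 'Z_m) * (m %/ (a ^ e * p))%:R = (m %/ p)%:R.
Proof.
move=> a0 p0 pa akm ek; rewrite -natrM; congr (_%:R).
have : (a ^ e * p %| m)%N.
  apply: dvdn_trans akm; apply: dvdn_trans (dvdn_exp2l a ek); rewrite expnS mulnC.
  by apply: dvdn_mul.
have ae0 : (0 < a ^ e * p)%N.
  by rewrite muln_gt0 p0 andbT expn_gt0 a0.
case/dvdnP => q hq.
have -> : (m %/ (a ^ e * p) = q)%N by rewrite hq mulnK.
have -> : (m %/ p = q * a ^ e)%N by rewrite hq mulnA mulnK.
by rewrite mulnC.
Qed.

Lemma u_p m p : (1 < m)%N -> (p %| m)%N -> ((m %/ p)%:R : 'Z_m) *+ p = 0.
Proof. by move=> m1 pm; rewrite -mulrnA divnK // pchar_Zp. Qed.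

Lemma u_inj m p (c c' : nat) : (1 < m)%N -> (0 < p)%N -> (p %| m)%N -> (c < p)%N -> (c' < p)%N ->
  ((m %/ p)%:R : 'Z_m) *+ c = (m %/ p)%:R *+ c' -> c = c'.
Proof.
move=> m1 p0 pm cp c'p; rewrite -!mulrnA => /(congr1 (fun x : 'Z_m => nat_of_ord x)); rewrite /= !val_Zp_nat //.
have hm : (m = m %/ p * p)%N by rewrite divnK.
have q0 : (0 < m %/ p)%N by rewrite divn_gt0 // dvdn_leq //; lia.
rewrite !modn_small; first by move/eqP; rewrite eqn_pmul2l // => /eqP.
- rewrite {2}hm ltn_pmul2l //.
- rewrite {2}hm ltn_pmul2l //.
Qed.

Lemma mulrn_Zp m (x y : 'Z_m) : x *+ (nat_of_ord y) = x * y.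
Proof. by rewrite -[x *+ _]mulr_natr natr_Zp. Qed.



Definition psi1 m n a (i : nat -> nat) p (f : 'rV['Z_m]_n.+1) : 'rV['Z_m]_n.+1 :=
  \row_j (if j == ord0 then f ord0 ord0 * (m %/ p)%:R
          else (f ord0 j - f ord0 ord0) * (m %/ (a ^ i (rr j + 1) * p))%:R).

Lemma ei j t : edge_index j.+1 t.+1 = (rr t + j.+1)%N.
Proof. by []. Qed.

Lemma part1 m n a k (i : nat -> nat) p' :
  (1 < m)%N -> (1 < a)%N -> (a ^ k %| m)%N -> (p'.+2 %| a)%N ->
  (forall s t, (1 <= s)%N -> (s <= t)%N -> (t <= rr n.+1)%N -> (i t <= i s)%N) ->
  (i 1 < k)%N ->
  let S := ones m n.+1 |: [set gen1 m a i j | j : 'I_n.+1 & (0 < j)%N] in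
  is_min_flowup_generating_set (fun s => (a ^ i s)%N) S /\ #|S| = n.+1.
Proof.
move=> m1 a1 akm pa H1 Hk.
set p := p'.+2.
have m0 : (0 < m)%N by lia.
have a0 : (0 < a)%N by lia.
have p0 : (0 < p)%N by [].
have pm : (p %| m)%N.
  apply: dvdn_trans pa _; apply: dvdn_trans akm; rewrite -{1}(expn1 a); apply: dvdn_exp2l; lia.
have hik s : (1 <= s)%N -> (s <= rr n.+1)%N -> (i s < k)%N.
  by move=> s1 sn; apply: leq_ltn_trans (H1 1%N s _ _ _) Hk.
have jb (j : 'I_n.+1) : (0 < j)%N -> (rr j + 1 <= rr n.+1)%N.
  move=> j0; apply: (leq_trans _ (rr_mono (ltn_ord j))); rewrite rrS; lia.
apply: (finish (l := fun s => (a ^ i s)%N) (G' := gen1 m a i) (psi := psi1 a i p) (u := (m %/ p)%:R) (p' := p')).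
- move=> j j0 s t st; rewrite /gen1 !mxE ei /=.
  have tn := ltn_ord t.
  case: (eqVneq s j) => [sj|sj]; case: (eqVneq t j) => [tj|tj].
  + by move: st; rewrite sj tj ltnn.
  + rewrite subr0 -sj; apply: in_ideal_pow; apply: H1; first by lia.
      by apply: leq_add; [apply: rr_mono; apply: ltnW | ].
    exact: edge_bound.
  + rewrite sub0r; apply: in_idealN; rewrite -tj; apply: in_ideal_pow; apply: H1; first by lia.
      by rewrite leq_add2l.
    exact: edge_bound.
  + by rewrite subrr; apply: in_ideal0.
- move=> j j0; rewrite /gen1 mxE eqxx; apply: (nz_pow a1 akm m0).
  by apply: hik; [lia | apply: jb].
- by move=> j j0 t tj; rewrite /gen1 mxE; case: eqP => // e; move: tj; rewrite e ltnn.
- move=> r f r0 hf hz.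
  have := hf ord0 r r0; rewrite ei hz // sub0r => -[c hc].
  by exists (nat_of_ord (- c))%:Z; rewrite /gen1 mxE eqxx -pmulrn mulrn_Zp mulrN mulrC -hc opprK.
- by move=> x y; apply/rowP => j; rewrite !mxE; case: ifP => _; ring.
- move=> g hg; apply/rowP => j; rewrite mxMnE !mxE.
  case: ifPn => [_|j0].
    by rewrite -mulrnAr u_p // mulr0.
  have j0' : (0 < j)%N by rewrite lt0n; move: j0; rewrite -val_eqE.
  have := hg ord0 j j0'; rewrite ei => -[c hc].
  have -> : g ord0 j - g ord0 ord0 = - (c * (a ^ i (rr j + 1))%N%:R) by rewrite -hc opprB.
  rewrite mulNr -mulrA (w_ok (k := k)) //; last by apply: hik; [lia|apply: jb].
  by rewrite mulNrn -mulrnAr u_p // mulr0 oppr0.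
- apply/rowP => j; rewrite !mxE; case: ifP => _; first by rewrite mul1r.
  by rewrite subrr mul0r.
- move=> j j0; apply/rowP => t; rewrite !mxE.
  case: (eqVneq t ord0) => [->|t0].
    have -> : (ord0 == j) = false by apply/negbTE; rewrite -val_eqE /=; lia.
    by rewrite mul0r.
  have -> : (ord0 == j) = false by apply/negbTE; rewrite -val_eqE /=; lia.
  rewrite subr0; case: (eqVneq t j) => [->|tj]; last by rewrite mul0r.
  by rewrite (w_ok (k := k)) //; apply: hik; [lia|apply: jb].
- by move=> c c' cp c'p; apply: u_inj.
Qed.



Definition psi2 m n a (i : nat -> nat) p (f : 'rV['Z_m]_n.+1) : 'rV['Z_m]_n.+1 :=
  \row_j (if j == ord0 then f ord0 ord0 * (m %/ p)%:R
          else (f ord0 j - f ord0 (inord j.-1)) * (m %/ (a ^ i (rr n.+1 - (n.+1 - j.+1)) * p))%N%:R).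

Lemma Eidx n j : (j <= n)%N -> (rr n.+1 - (n.+1 - j.+1) = rr n + j)%N.
Proof. by move=> jn; rewrite rrS; lia. Qed.

Lemma key2 m n a (i : nat -> nat) (g : 'rV['Z_m]_n.+1) (r : 'I_n.+1) :
  (forall s t, (1 <= s)%N -> (s <= t)%N -> (t <= rr n.+1)%N -> (i s <= i t)%N) ->
  is_spline (fun s => (a ^ i s)%N) g -> (0 < r)%N ->
  in_ideal (g ord0 r - g ord0 (inord r.-1)) (a ^ i (rr n + r))%N.
Proof.
move=> H2 hg r0.
have rn := ltn_ord r.
have qv : nat_of_ord (inord r.-1 : 'I_n.+1) = r.-1 by rewrite inordK //; lia.
have h1 := hg (inord r.-1) ord_max ltac:(rewrite qv /=; lia).
rewrite ei qv prednK // /= in h1.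
case: (eqVneq (nat_of_ord r) n) => [rn'|rn'].
  have -> : g ord0 r = g ord0 ord_max by congr (g ord0 _); apply: val_inj; rewrite /= rn'.
  have -> : g ord0 ord_max - g ord0 (inord r.-1) = - (g ord0 (inord r.-1) - g ord0 ord_max) by rewrite opprB.
  exact: in_idealN h1.
have h2 := hg r ord_max ltac:(rewrite /=; lia).
rewrite ei /= in h2.
have -> : g ord0 r - g ord0 (inord r.-1) = (g ord0 r - g ord0 ord_max) - (g ord0 (inord r.-1) - g ord0 ord_max) by ring.
apply: in_idealB => //.
apply: in_ideal_dvd h2; apply: dvdn_exp2l; apply: H2; rewrite ?rrS; lia.
Qed.

Lemma part2 m n a k (i : nat -> nat) p' :
  (1 < m)%N -> (1 < a)%N -> (a ^ k %| m)%N -> (p'.+2 %| a)%N ->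
  (forall s t, (1 <= s)%N -> (s <= t)%N -> (t <= rr n.+1)%N -> (i s <= i t)%N) ->
  (i (rr n.+1) < k)%N ->
  let S := ones m n.+1 |: [set gen2 m a i j | j : 'I_n.+1 & (0 < j)%N] in
  is_min_flowup_generating_set (fun s => (a ^ i s)%N) S /\ #|S| = n.+1.
Proof.
move=> m1 a1 akm pa H2 Hk.
set p := p'.+2.
have m0 : (0 < m)%N by lia.
have a0 : (0 < a)%N by lia.
have p0 : (0 < p)%N by [].
have pm : (p %| m)%N.
  apply: dvdn_trans pa _; apply: dvdn_trans akm; rewrite -{1}(expn1 a); apply: dvdn_exp2l; lia.
have hik (j : 'I_n.+1) : (0 < j)%N -> (i (rr n.+1 - (n.+1 - j.+1)) < k)%N.
  move=> j0; rewrite Eidx; last by have := ltn_ord j; lia.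
  apply: leq_ltn_trans (H2 _ _ _ _ _) Hk; rewrite ?rrS; have := ltn_ord j; lia.
have qv (j : 'I_n.+1) : nat_of_ord (inord j.-1 : 'I_n.+1) = j.-1.
  by rewrite inordK //; have := ltn_ord j; lia.
apply: (finish (l := fun s => (a ^ i s)%N) (G' := gen2 m a i) (psi := psi2 a i p) (u := (m %/ p)%:R) (p' := p')).
- move=> j j0 s t st; rewrite /gen2 !mxE ei /=.
  have tn := ltn_ord t; have jn := ltn_ord j.
  case: (leqP j s) => js.
    by rewrite (leq_trans js (ltnW st)) subrr; apply: in_ideal0.
  case: (leqP j t) => jt; last by rewrite subrr; apply: in_ideal0.
  rewrite sub0r; apply: in_idealN; apply: in_ideal_pow; rewrite Eidx; last by lia.
  apply: H2; first by lia.
    apply: leq_add; last by [].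
    by apply: rr_mono; lia.
  by rewrite rrS; lia.
- move=> j j0; rewrite /gen2 mxE leqnn; apply: (nz_pow a1 akm m0).
  exact: hik.
- move=> j j0 t tj; rewrite /gen2 mxE; case: leqP => //; lia.
- move=> r f r0 hf hz.
  have := key2 H2 hf r0; rewrite (hz (inord r.-1)); last by rewrite qv; lia.
  rewrite subr0 -Eidx; last by have := ltn_ord r; lia.
  move=> -[c hc].
  by exists (nat_of_ord c)%:Z; rewrite /gen2 mxE leqnn -pmulrn mulrn_Zp mulrC -hc.
- by move=> x y; apply/rowP => j; rewrite !mxE; case: ifP => _; ring.
- move=> g hg; apply/rowP => j; rewrite mxMnE !mxE.
  case: ifPn => [_|j0].
    by rewrite -mulrnAr u_p // mulr0.
  have j0' : (0 < j)%N by rewrite lt0n; move: j0; rewrite -val_eqE.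
  have := key2 H2 hg j0'; rewrite -Eidx; last by have := ltn_ord j; lia.
  move=> -[c ->].
  rewrite -mulrA (w_ok (k := k)) //; last by apply: hik.
  by rewrite -mulrnAr u_p // mulr0.
- apply/rowP => j; rewrite !mxE; case: ifP => _; first by rewrite mul1r.
  by rewrite subrr mul0r.
- move=> j j0; apply/rowP => t; rewrite /gen2 !mxE.
  case: (eqVneq t ord0) => [->|t0].
    have -> : (ord0 == j) = false by apply/negbTE; rewrite -val_eqE /=; lia.
    by rewrite leqNgt j0 mul0r.
  have t0' : (0 < t)%N by rewrite lt0n; move: t0; rewrite -val_eqE.
  rewrite qv.
  case: (eqVneq t j) => [->|tj].
    rewrite leqnn; have -> : (j <= j.-1)%N = false by lia.
    by rewrite subr0 (w_ok (k := k)) //; apply: hik.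
  have tj' : nat_of_ord t != nat_of_ord j by [].
  case: (leqP j t) => jt.
    by rewrite (_ : (j <= t.-1)%N = true) ?subrr ?mul0r //; lia.
  by rewrite (_ : (j <= t.-1)%N = false) ?subrr ?mul0r //; lia.
- by move=> c c' cp c'p; apply: u_inj.
Qed.


Lemma mono_dec (f : nat -> nat) N :
  (forall s, (1 <= s < N)%N -> (f s.+1 <= f s)%N) ->
  forall s t, (1 <= s)%N -> (s <= t)%N -> (t <= N)%N -> (f t <= f s)%N.
Proof.
move=> h s t s1; elim: t => [|t IH] st tN; first by lia.
case: (eqVneq s t.+1) => [-> //|ne].
have st' : (s <= t)%N by lia.
apply: leq_trans (h t _) (IH st' _); lia.
Qed.

Lemma mono_inc (f : nat -> nat) N :
  (forall s, (1 <= s < N)%N -> (f s <= f s.+1)%N) ->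
  forall s t, (1 <= s)%N -> (s <= t)%N -> (t <= N)%N -> (f s <= f t)%N.
Proof.
move=> h s t s1; elim: t => [|t IH] st tN; first by lia.
case: (eqVneq s t.+1) => [-> //|ne].
have st' : (s <= t)%N by lia.
apply: leq_trans (IH st' _) (h t _); lia.
Qed.

Unset Implicit Arguments.

Theorem mainTheorem5 (m n a k : nat) (i : nat -> nat) :
  (1 < m)%N -> (2 <= n)%N -> (1 < a)%N -> zero_divisor m a ->
  (1 <= k)%N -> (a ^ k %| m)%N ->
  (* part (1) *)
  (((forall s, (1 <= s < rr n)%N -> (a ^ i s.+1 %| a ^ i s)%N) ->
    (a ^ i 1 %| a ^ k)%N -> (1 <= i (rr n))%N -> (i 1 < k)%N ->
    let S := ones m n |: [set gen1 m a i j | j : 'I_n & (0 < j)%N] in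
    is_min_flowup_generating_set (fun s => (a ^ i s)%N) S /\ #|S| = n)
  /\
  (* part (2) *)
   ((forall s, (1 <= s < rr n)%N -> (a ^ i s %| a ^ i s.+1)%N) ->
    (a ^ i (rr n) %| a ^ k)%N -> (1 <= i 1)%N -> (i (rr n) < k)%N ->
    let S := ones m n |: [set gen2 m a i j | j : 'I_n & (0 < j)%N] in
    is_min_flowup_generating_set (fun s => (a ^ i s)%N) S /\ #|S| = n)).
Proof.
move=> m1 n2 a1 _ k1 akm.
case: n n2 => [|n] // _.
have pp := pdiv_prime a1.
move: (pdiv_dvd a) (prime_gt1 pp); case: (pdiv a) => [|[|p']] // pa _.
split.
- move=> h1 _ _ hk.
  apply: (part1 (k := k) (p' := p')) => //.
  apply: mono_dec => s hs; rewrite -(dvdn_Pexp2l _ _ a1); exact: h1.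
- move=> h2 _ _ hk.
  apply: (part2 (k := k) (p' := p')) => //.
  apply: mono_inc => s hs; rewrite -(dvdn_Pexp2l _ _ a1); exact: h2.
Qed.
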